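(* Let $\tau$ be a tau-function of the extended bigraded Toda hierarchy with wave operators $W,\bar W$. For every $n\ge1$, $$-\frac{\bigl((L^{\frac{-n}{k}})_-W\bigr)z^s}{Wz^s}=G(z)(nt_n)-nt_n,\qquad \frac{\bigl((L^{\frac{-n}{k}})_+\bar W\bigr)z^s}{\bar Wz^s}=\bar G(z)(nt_n)-nt_n,$$ and $$-\frac{\bigl((L^{\frac{-n}{m}})_-W\bigr)z^s}{Wz^s}=G(z)(n\bar t_n)-n\bar t_n,\qquad \frac{\bigl((L^{\frac{-n}{m}})_+\bar W\bigr)z^s}{\bar Wz^s}=\bar G(z)(n\bar t_n)-n\bar t_n.$$ That is, the vector fields on tau-functions induced by $\partial^*_{L^{\frac{-n}{k}}}$ and $\partial^*_{L^{\frac{-n}{m}}}$ are multiplication by $nt_n$ and $n\bar t_n$, respectively, up to adding a function from $\mathcal F$.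
   Context: Let $s$ be a variable, $\Lambda$ the shift $(\Lambda f)(s)=f(s+1)$, $\mathcal A$ the space of formal difference operators $\sum_{i\in\mathbb Z}a_i(s)\Lambda^i$, $A_+=\sum_{i\ge0}a_i\Lambda^i$, $A_-=\sum_{i<0}a_i\Lambda^i$, products $(a(s)\Lambda^i)(b(s)\Lambda^j)=a(s)b(s+i)\Lambda^{i+j}$ where defined; operators act on $z^s$ by $(a(s)\Lambda^i)z^s=a(s)z^iz^s$. Fix $k,m\ge1$. Variables: $s=x_0$, $\mathbf x=(x_1,\dots)$, $\mathbf t=(t_1,\dots)$, $\bar{\mathbf t}=(\bar t_1,\dots)$, with $t_{nk}$ and $\bar t_{nm}$ distinct. Let $[z]=(z,z^2/2,z^3/3,\dots)$; for a function $g(s,\mathbf t,\bar{\mathbf t},\mathbf x)$ put $G(z)g=g(s,\mathbf t-[z^{-1}],\bar{\mathbf t},\mathbf x)$, $\bar G(z)g=g(s+1,\mathbf t,\bar{\mathbf t}+[z],\mathbf x)$. A tau-function of the EBTH is a function $\tau(s,\mathbf t,\bar{\mathbf t},\mathbf x)$ such that, writing $G(z)\tau/\tau=1+\sum_{i\ge1}w_iz^{-i}$, $\bar G(z)\tau/\tau=\sum_{i\ge0}\bar w_iz^i$, the operators $W=1+\sum w_i\Lambda^{-i}$, $\bar W=\sum\bar w_i\Lambda^i$ ($\bar w_0\ne0$) satisfy $W\Lambda^kW^{-1}=\bar W\Lambda^{-m}\bar W^{-1}=:L$ with $L=\Lambda^k+\dots+u_{-m}\Lambda^{-m}$ ($u_{-m}\ne0$)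 and the EBTH flows $\partial_{t_n}W=-(L^{\frac nk})_-W$, $\partial_{t_n}\bar W=(L^{\frac nk})_+\bar W$, $\partial_{\bar t_n}W=-(L^{\frac nm})_-W$, $\partial_{\bar t_n}\bar W=(L^{\frac nm})_+\bar W$, $\partial_{x_n}W=-(2L^n\log L)_-W$, $\partial_{x_n}\bar W=(2L^n\log L)_+\bar W$, where $L^{\frac nk}:=W\Lambda^nW^{-1}$, $L^{\frac nm}:=\bar W\Lambda^{-n}\bar W^{-1}$ ($n\in\mathbb Z$) and $\log L=\frac12W\partial_sW^{-1}-\frac12\bar W\partial_s\bar W^{-1}$. For a difference operator $a$ commuting with $L$, $\partial^*_a$ denotes the symmetry $W\mapsto-a_-W$, $\bar W\mapsto a_+\bar W$. $\mathcal F$ is the space of functions $f(s,\mathbf x)$ with $f(s+1,\mathbf x)=f(s,\mathbf x)$. *)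

(* Defs.v *)
From HB Require Import structures.
From mathcomp Require Import all_boot all_order all_algebra.
From mathcomp Require Import all_classical all_reals all_analysis.
Set Implicit Arguments. Unset Strict Implicit. Unset Printing Implicit Defensive.
Import Order.TTheory GRing.Theory Num.Theory.
Local Open Scope ring_scope.
Local Open Scope classical_set_scope.

Section EBTH.
Variable R : realType.

(* A point: s = x_0, t = (t_1,t_2,...), tb = (tbar_1,...), x = (x_1,...).
   The sequences are indexed by nat; index 0 of t, tb, x is unused. *)
Record pt := Pt { ps : R; pt_t : nat -> R; pt_tb : nat -> R; pt_x : nat -> R }.

Definition fn := pt -> R.

(* formal difference operator  sum_{i in Z} a_i Lambda^i : i |-> a_i *)
Definition op := int -> fn.
(* formal series sum_{i in Z} c_i z^i, c_i functions : i |-> c_i *)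
Definition fser := int -> fn.

Definition shiftp (i : int) (p : pt) : pt :=
  Pt (ps p + i%:~R) (pt_t p) (pt_tb p) (pt_x p).

Definition Lam (i : int) : op := fun j _ => if j == i then 1 else 0.
Definition op_add (a b : op) : op := fun i p => a i p + b i p.
Definition op_opp (a : op) : op := fun i p => - a i p.
Definition op_scale (c : R) (a : op) : op := fun i p => c * a i p.
Definition op_plus (a : op) : op := fun i p => if 0 <= i then a i p else 0.
Definition op_minus (a : op) : op := fun i p => if i < 0 then a i p else 0.

(* (a_i Lambda^i)(b_j Lambda^j) = a_i(s) b_j(s+i) Lambda^(i+j); the product is
   the (pointwise finite) sum; it is only used where it is defined, i.e. where
   the sum is finite (bounded-above x bounded-above, bounded-below x
   bounded-below, or one factor finite). *)
Definition op_mul (a b : op) : op := fun l p =>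
  \sum_(i \in [set i : int | a i p != 0 /\ b (l - i) (shiftp i p) != 0])
     (a i p * b (l - i) (shiftp i p)).

Definition op_pow (a : op) (n : nat) : op := iter n (op_mul a) (Lam 0).

Definition bnd_above (a : op) := exists N : int, forall i p, N < i -> a i p = 0.
Definition bnd_below (a : op) := exists N : int, forall i p, i < N -> a i p = 0.

Definition op_D (D : fn -> fn) (a : op) : op := fun i => D (a i).

(* action on z^s: (sum a_i Lambda^i) z^s = z^s * sum_i a_i z^i; we record the
   formal series sum_i a_i z^i, i.e. (a z^s)/z^s *)
Definition op_zs (a : op) : fser := fun i p => a i p.

Definition fs_mul (c d : fser) : fser := fun l p =>
  \sum_(i \in [set i : int | c i p != 0 /\ d (l - i) p != 0]) (c i p * d (l - i) p).
Definition fs_sub (c d : fser) : fser := fun i p => c i p - d i p.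
Definition fs_opp (c : fser) : fser := fun i p => - c i p.
Definition fs_const (g : fn) : fser := fun i p => if i == 0 then g p else 0.

Definition upd (f : nat -> R) (n : nat) (h : R) : nat -> R :=
  fun j => if j == n then f j + h else f j.
Definition ds (f : fn) : fn := fun p =>
  derive1 (fun h : R => f (Pt (ps p + h) (pt_t p) (pt_tb p) (pt_x p))) 0.
Definition dt (n : nat) (f : fn) : fn := fun p =>
  derive1 (fun h : R => f (Pt (ps p) (upd (pt_t p) n h) (pt_tb p) (pt_x p))) 0.
Definition dtb (n : nat) (f : fn) : fn := fun p =>
  derive1 (fun h : R => f (Pt (ps p) (pt_t p) (upd (pt_tb p) n h) (pt_x p))) 0.
Definition dx (n : nat) (f : fn) : fn := fun p =>
  derive1 (fun h : R => f (Pt (ps p) (pt_t p) (pt_tb p) (upd (pt_x p) n h))) 0.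

(* Elementary Schur polynomials p_k applied to commuting derivations:
   sum_k p_k(y) lam^k = exp(sum_j y_j lam^j), computed by the recursion
   k p_k = sum_{j=1}^k (j y_j) p_{k-j}; here d j plays the role of j*y_j. *)
Fixpoint schur_tab (d : nat -> fn -> fn) (g : fn) (k : nat) : seq fn :=
  if k is k'.+1 then
    let s := schur_tab d g k' in
    rcons s (fun p => (k%:R)^-1 * \sum_(j < k) d j.+1 (nth g s (k' - j)) p)
  else [:: g].
Definition schur_coef (d : nat -> fn -> fn) (g : fn) (k : nat) : fn :=
  nth g (schur_tab d g k) k.

(* G(z) g = g(s, t - [z^-1], tbar, x) = exp(- sum_j z^-j/j d/dt_j) g,
   as a formal series in z^-1 (coefficient of z^i, i <= 0) *)
Definition Gser (g : fn) : fser := fun i =>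
  if i <= 0 then schur_coef (fun j f p => - dt j f p) g `|i|%N else (fun _ => 0).
(* Gbar(z) g = g(s+1, t, tbar + [z], x), formal series in z (i >= 0) *)
Definition Gbser (g : fn) : fser := fun i =>
  if 0 <= i then (fun p => schur_coef dtb g `|i|%N (shiftp 1 p)) else (fun _ => 0).

(* wave operators of tau:  W = 1 + sum w_i Lambda^-i with G(z)tau/tau = 1 + sum w_i z^-i,
   Wbar = sum wb_i Lambda^i with Gbar(z)tau/tau = sum wb_i z^i *)
Definition W_of (tau : fn) : op := fun i p => Gser tau i p / tau p.
Definition Wb_of (tau : fn) : op := fun i p => Gbser tau i p / tau p.

(* L^(n/k) := W Lambda^n W^-1,  L^(n/m) := Wbar Lambda^-n Wbar^-1 *)
Definition Lk (W Winv : op) (n : int) : op := op_mul (op_mul W (Lam n)) Winv.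
Definition Lm (Wb Wbinv : op) (n : int) : op := op_mul (op_mul Wb (Lam (- n))) Wbinv.

(* log L = 1/2 W d_s W^-1 - 1/2 Wbar d_s Wbar^-1
         = 1/2 W (d_s W^-1) - 1/2 Wbar (d_s Wbar^-1)  (the d_s terms cancel) *)
Definition logL (W Winv Wb Wbinv : op) : op :=
  op_add (op_scale (1/2) (op_mul W (op_D ds Winv)))
         (op_scale (- (1/2)) (op_mul Wb (op_D ds Wbinv))).

Definition is_EBTH_tau (k m : nat) (tau : fn) (Winv Wbinv : op) : Prop :=
  let W := W_of tau in
  let Wb := Wb_of tau in
  let L := Lk W Winv k%:Z in
  let B (n : nat) := op_scale 2 (op_mul (op_pow L n) (logL W Winv Wb Wbinv)) in
  [/\ (forall p, tau p != 0) /\ (forall p, Wb 0 p != 0),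
      [/\ op_mul W Winv = Lam 0, op_mul Winv W = Lam 0 & bnd_above Winv],
      [/\ op_mul Wb Wbinv = Lam 0, op_mul Wbinv Wb = Lam 0 & bnd_below Wbinv],
      [/\ L = Lm Wb Wbinv m%:Z,
          (forall i p, (k%:Z < i) \/ (i < - m%:Z) -> L i p = 0),
          (forall p, L k%:Z p = 1) &
          (exists p, L (- m%:Z) p != 0)] &
      (forall n : nat, (0 < n)%N ->
        [/\ op_D (dt n) W = op_opp (op_mul (op_minus (Lk W Winv n%:Z)) W)
             /\ op_D (dt n) Wb = op_mul (op_plus (Lk W Winv n%:Z)) Wb,
            op_D (dtb n) W = op_opp (op_mul (op_minus (Lm Wb Wbinv n%:Z)) W)
             /\ op_D (dtb n) Wb = op_mul (op_plus (Lm Wb Wbinv n%:Z)) Wb &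
            op_D (dx n) W = op_opp (op_mul (op_minus (B n)) W)
             /\ op_D (dx n) Wb = op_mul (op_plus (B n)) Wb])].

Definition ntn (n : nat) : fn := fun p => n%:R * pt_t p n.
Definition ntbn (n : nat) : fn := fun p => n%:R * pt_tb p n.

End EBTH.

(* Main.v *)
Require Import Defs.
From HB Require Import structures.
From mathcomp Require Import all_boot all_order all_algebra.
From mathcomp Require Import all_classical all_reals all_analysis.
From mathcomp Require Import zify.
Import Order.TTheory GRing.Theory Num.Theory.
Local Open Scope ring_scope.
Local Open Scope classical_set_scope.

Lemma fsum_win (R : realType) (F : int -> R) (S : set int) (lo : int) (N : nat) :
  (forall i, S i -> (lo <= i) && (i < lo + N%:Z)) -> (forall i, ~ S i -> F i = 0) ->
  \sum_(i \in S) F i = \sum_(k < N) F (lo + k%:Z).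
Proof.
move=> HS HF.
rewrite (fsbig_fwiden [seq lo + k%:Z | k <- iota 0 N]) //.
- by rewrite big_map -(big_mkord xpredT (fun k => F (lo + k%:Z))) /index_iota subn0.
- move=> i /HS /andP[h1 h2] /=; apply/mapP; exists `|i - lo|%N.
    rewrite mem_iota add0n; lia.
  lia.
- rewrite map_inj_uniq ?iota_uniq // => x y /addrI /eqP; rewrite eqz_nat => /eqP //.
- move=> i [_ nS]; exact: HF.
Qed.

Lemma nz0 (R : realType) (x : R) : ~ (x != 0) -> x = 0.
Proof. by move/negP; rewrite negbK => /eqP. Qed.

Lemma op_mul_win (R : realType) (a b : op R) (l : int) (p : pt R) (lo : int) (N : nat) :
  (forall i, a i p != 0 -> b (l - i) (shiftp i p) != 0 -> (lo <= i) && (i < lo + N%:Z)) ->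
  op_mul a b l p = \sum_(k < N) a (lo + k%:Z) p * b (l - (lo + k%:Z)) (shiftp (lo + k%:Z) p).
Proof.
move=> H; rewrite /op_mul; apply: fsum_win => [i [h1 h2]|i]; first exact: H.
by move/not_andP => [] /nz0 ->; rewrite ?mul0r ?mulr0.
Qed.

Lemma fs_mul_win (R : realType) (a b : fser R) (l : int) (p : pt R) (lo : int) (N : nat) :
  (forall i, a i p != 0 -> b (l - i) p != 0 -> (lo <= i) && (i < lo + N%:Z)) ->
  fs_mul a b l p = \sum_(k < N) a (lo + k%:Z) p * b (l - (lo + k%:Z)) p.
Proof.
move=> H; rewrite /fs_mul; apply: fsum_win => [i [h1 h2]|i]; first exact: H.
by move/not_andP => [] /nz0 ->; rewrite ?mul0r ?mulr0.
Qed.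

Arguments op_mul_win {R a b l p lo N}.
Arguments fs_mul_win {R a b l p lo N}.

Lemma shiftpD (R : realType) (i j : int) (p : pt R) :
  shiftp i (shiftp j p) = shiftp (j + i) p.
Proof. by rewrite /shiftp /= -addrA -intrD. Qed.

Lemma op_mul_Lam (R : realType) (a : op R) s l p : op_mul a (Lam s) l p = a (l - s) p.
Proof.
rewrite (@op_mul_win _ _ _ _ _ (l - s) 1).
  rewrite big_ord1 /Lam; case: eqP => [_|h]; first by rewrite mulr1 addr0.
  by exfalso; apply: h => /=; lia.
move=> i _; rewrite /Lam; case: ifP => [/eqP h _|_]; [lia | by rewrite eqxx].
Qed.

Lemma assoc_win (R : realType) (a b c : op R) (l : int) (p : pt R) (lo : int) (NN : nat) :
 (forall i, op_mul a b i p != 0 -> c (l - i) (shiftp i p) != 0 -> (lo <= i) && (i < lo + NN%:Z)) ->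
 (forall i j, (lo <= i) && (i < lo + NN%:Z) -> a j p != 0 -> b (i - j) (shiftp j p) != 0 ->
    (lo <= j) && (j < lo + NN%:Z)) ->
 (forall j, a j p != 0 -> op_mul b c (l - j) (shiftp j p) != 0 -> (lo <= j) && (j < lo + NN%:Z)) ->
 (forall j i', (lo <= j) && (j < lo + NN%:Z) -> b i' (shiftp j p) != 0 ->
    c (l - j - i') (shiftp i' (shiftp j p)) != 0 -> (lo - j <= i') && (i' < lo - j + NN%:Z)) ->
 op_mul (op_mul a b) c l p = op_mul a (op_mul b c) l p.
Proof.
move=> H1 H2 H3 H4.
rewrite (op_mul_win H1) (op_mul_win H3).
transitivity (\sum_(k < NN) \sum_(k' < NN) (a (lo + k'%:Z) p *
   b ((lo + k%:Z) - (lo + k'%:Z)) (shiftp (lo + k'%:Z) p)) *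
   c (l - (lo + k%:Z)) (shiftp (lo + k%:Z) p)).
  apply: eq_bigr => k _; rewrite (op_mul_win (lo:=lo) (N:=NN)) ?mulr_suml //.
  move=> j; apply: H2; have ? := ltn_ord k; apply/andP; split; lia.
transitivity (\sum_(k' < NN) a (lo + k'%:Z) p * \sum_(k < NN)
   b (lo - (lo + k'%:Z) + k%:Z) (shiftp (lo + k'%:Z) p) *
   c (l - (lo + k'%:Z) - (lo - (lo + k'%:Z) + k%:Z))
     (shiftp (lo - (lo + k'%:Z) + k%:Z) (shiftp (lo + k'%:Z) p))); last first.
  apply: eq_bigr => k' _; rewrite (op_mul_win (lo:=lo - (lo + k'%:Z)) (N:=NN)) //.
  move=> j; apply: H4; have ? := ltn_ord k'; apply/andP; split; lia.
rewrite exchange_big /=; apply: eq_bigr => k' _; rewrite mulr_sumr.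
apply: eq_bigr => k _; rewrite mulrA shiftpD.
congr (_ * _ * c _ (shiftp _ p)); first congr (b _ _); lia.
Qed.

Lemma size_schur_tab (R : realType) (d : nat -> fn R -> fn R) g k :
  size (schur_tab d g k) = k.+1.
Proof. by elim: k => //= k IH; rewrite size_rcons IH. Qed.

Lemma nth_schur (R : realType) (d : nat -> fn R -> fn R) g k i :
  (i <= k)%N -> nth g (schur_tab d g k) i = schur_coef d g i.
Proof.
elim: k i => [|k IH] i hi; first by move: hi; rewrite leqn0 => /eqP ->.
case: (ltnP i k.+1) => h.
  by rewrite /= nth_rcons size_schur_tab h IH.
have -> : i = k.+1 by apply/eqP; rewrite eqn_leq hi h.
by [].
Qed.

Lemma schur_coef0 (R : realType) (d : nat -> fn R -> fn R) g : schur_coef d g 0 = g.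
Proof. by []. Qed.

Lemma schur_coefS (R : realType) (d : nat -> fn R -> fn R) g k :
  schur_coef d g k.+1 =
  (fun p => (k.+1%:R)^-1 * \sum_(j < k.+1) d j.+1 (schur_coef d g (k - j)) p).
Proof.
rewrite {1}/schur_coef /= nth_rcons size_schur_tab ltnn eqxx.
apply: funext => p; congr (_ * _); apply: eq_bigr => j _.
by rewrite nth_schur // leq_subr.
Qed.

Lemma schur_lin (R : realType) (d : nat -> fn R -> fn R) g (a : nat -> R) :
  (forall j c, d j.+1 (fun _ => c) = fun _ => 0) ->
  (forall j, d j.+1 g = fun _ => a j) ->
  forall k, schur_coef d g k.+1 = fun _ => (k.+1%:R)^-1 * a k.
Proof.
move=> Hc Hg.
suff H : forall K k, (k <= K)%N -> schur_coef d g k.+1 = fun _ => (k.+1%:R)^-1 * a k.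
  by move=> k; apply: (H k).
elim=> [|K IH] k hk.
  move: hk; rewrite leqn0 => /eqP ->; rewrite schur_coefS; apply: funext => p.
  by rewrite big_ord1 subnn schur_coef0 Hg.
rewrite schur_coefS; apply: funext => p; congr (_ * _).
rewrite big_ord_recr /= subnn schur_coef0 Hg big1 ?add0r // => j _.
have -> : (k - j = (k - j.+1).+1)%N by have := ltn_ord j; lia.
rewrite IH; last by have := ltn_ord j; lia.
by rewrite Hc.
Qed.

Lemma derive1_lin (R : realType) (c a : R) : derive1 (fun h : R => c * (a + h)) 0 = c.
Proof.
rewrite derive1E.
have -> : (fun h : R => c * (a + h)) = (fun h => c * a + c * h).
  by apply: funext => h; rewrite mulrDr.
rewrite deriveD //= ?deriveM ?derive_cst// derive_id.
rewrite -![_ *: _]/(_ * _).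
by rewrite !mulr0 mulr1 !add0r addr0.
Qed.

Lemma derive1_c (R : realType) (c : R) : derive1 (fun h : R => c) 0 = 0.
Proof. exact: derive1_cst. Qed.

Lemma dt_cst (R : realType) j (c : R) : dt j (fun _ : pt R => c) = fun _ => 0.
Proof. by apply: funext => p; rewrite /dt derive1_c. Qed.
Lemma dtb_cst (R : realType) j (c : R) : dtb j (fun _ : pt R => c) = fun _ => 0.
Proof. by apply: funext => p; rewrite /dtb derive1_c. Qed.

Lemma dt_ntn (R : realType) j n :
  dt j (ntn (R:=R) n) = fun _ => if n == j then n%:R else 0.
Proof.
apply: funext => p; rewrite /dt /ntn /upd /=.
case: eqP => _; first exact: derive1_lin.
exact: derive1_c.
Qed.
Lemma dtb_ntbn (R : realType) j n :
  dtb j (ntbn (R:=R) n) = fun _ => if n == j then n%:R else 0.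
Proof.
apply: funext => p; rewrite /dtb /ntbn /upd /=.
case: eqP => _; first exact: derive1_lin.
exact: derive1_c.
Qed.
Lemma dt_ntbn (R : realType) j n : dt j (ntbn (R:=R) n) = fun _ => 0.
Proof. by apply: funext => p; rewrite /dt /ntbn /= derive1_c. Qed.
Lemma dtb_ntn (R : realType) j n : dtb j (ntn (R:=R) n) = fun _ => 0.
Proof. by apply: funext => p; rewrite /dtb /ntn /= derive1_c. Qed.

Lemma c_Gser_ntn (R : realType) n (i : int) (p : pt R) : (0 < n)%N ->
  fs_sub (Gser (ntn n)) (fs_const (ntn n)) i p = if i == - n%:Z then -1 else 0.
Proof.
move=> n0; rewrite /fs_sub /Gser /fs_const.
case: (ltrP 0 i) => hi.
  rewrite (gt_eqF hi).
  by rewrite ifF ?subr0 //; apply/eqP; lia.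
case E: `|i|%N => [|k].
  have -> : i = 0 by lia.
  by rewrite eqxx schur_coef0 subrr ifF //; apply/eqP; lia.
rewrite (@schur_lin _ _ _ (fun j => - (if n == j.+1 then n%:R else 0))).
- have hi0 : (i == 0) = false by apply/eqP; lia.
  rewrite hi0 subr0; case: (eqVneq n k.+1) => h.
    have -> : (i == - n%:Z) = true by apply/eqP; lia.
    by rewrite -h mulrN mulVf // pnatr_eq0 -lt0n.
  have -> : (i == - n%:Z) = false by apply/eqP; lia.
  by rewrite oppr0 mulr0.
- by move=> j c; apply: funext => q; rewrite dt_cst oppr0.
- by move=> j; apply: funext => q; rewrite dt_ntn.
Qed.

Lemma c_Gbser_ntbn (R : realType) n (i : int) (p : pt R) : (0 < n)%N ->
  fs_sub (Gbser (ntbn n)) (fs_const (ntbn n)) i p = if i == n%:Z then 1 else 0.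
Proof.
move=> n0; rewrite /fs_sub /Gbser /fs_const.
case: (ltrP i 0) => hi.
  rewrite (lt_eqF hi).
  by rewrite ifF ?subr0 //; apply/eqP; lia.
case E: `|i|%N => [|k].
  have -> : i = 0 by lia.
  by rewrite eqxx schur_coef0 subrr ifF //; apply/eqP; lia.
rewrite (@schur_lin _ _ _ (fun j => (if n == j.+1 then n%:R else 0))).
- have hi0 : (i == 0) = false by apply/eqP; lia.
  rewrite hi0 subr0; case: (eqVneq n k.+1) => h.
    have -> : (i == n%:Z) = true by apply/eqP; lia.
    by rewrite -h mulVf // pnatr_eq0 -lt0n.
  have -> : (i == n%:Z) = false by apply/eqP; lia.
  by rewrite mulr0.
- by move=> j c; rewrite dtb_cst.
- by move=> j; rewrite dtb_ntbn.
Qed.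

Lemma c_Gser_ntbn (R : realType) n (i : int) (p : pt R) :
  fs_sub (Gser (ntbn n)) (fs_const (ntbn n)) i p = 0.
Proof.
rewrite /fs_sub /Gser /fs_const.
case: (ltrP 0 i) => hi.
  rewrite (gt_eqF hi) ?(lt_eqF hi).
  by rewrite subr0.
case E: `|i|%N => [|k].
  have -> : i = 0 by lia.
  by rewrite eqxx schur_coef0 subrr.
rewrite (@schur_lin _ _ _ (fun j => 0)).
- have hi0 : (i == 0) = false by apply/eqP; lia.
  by rewrite hi0 subr0 mulr0.
- by move=> j c; apply: funext => q; rewrite dt_cst oppr0.
- by move=> j; apply: funext => q; rewrite dt_ntbn oppr0.
Qed.

Lemma c_Gbser_ntn (R : realType) n (i : int) (p : pt R) :
  fs_sub (Gbser (ntn n)) (fs_const (ntn n)) i p = 0.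
Proof.
rewrite /fs_sub /Gbser /fs_const.
case: (ltrP i 0) => hi.
  rewrite (lt_eqF hi).
  by rewrite subr0.
case E: `|i|%N => [|k].
  have -> : i = 0 by lia.
  by rewrite eqxx schur_coef0 subrr.
rewrite (@schur_lin _ _ _ (fun j => 0)).
- have hi0 : (i == 0) = false by apply/eqP; lia.
  by rewrite hi0 subr0 mulr0.
- by move=> j c; rewrite dtb_cst.
- by move=> j; rewrite dtb_ntn.
Qed.

Theorem lemma4p3 (R : realType) (k m : nat) (tau : fn R) (Winv Wbinv : op R) :
  (0 < k)%N -> (0 < m)%N ->
  is_EBTH_tau k m tau Winv Wbinv ->
  forall n : nat, (0 < n)%N ->
  let W := W_of tau in
  let Wb := Wb_of tau in
  [/\ fs_mul (fs_sub (Gser (ntn n)) (fs_const (ntn n))) (op_zs W)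
        = fs_opp (op_zs (op_mul (op_minus (Lk W Winv (- n%:Z))) W)),
      fs_mul (fs_sub (Gbser (ntn n)) (fs_const (ntn n))) (op_zs Wb)
        = op_zs (op_mul (op_plus (Lk W Winv (- n%:Z))) Wb),
      fs_mul (fs_sub (Gser (ntbn n)) (fs_const (ntbn n))) (op_zs W)
        = fs_opp (op_zs (op_mul (op_minus (Lm Wb Wbinv (- n%:Z))) W)) &
      fs_mul (fs_sub (Gbser (ntbn n)) (fs_const (ntbn n))) (op_zs Wb)
        = op_zs (op_mul (op_plus (Lm Wb Wbinv (- n%:Z))) Wb)].
Proof.
move=> k0 m0 H n n0 W Wb; rewrite {}/W {}/Wb.
move: H; rewrite /is_EBTH_tau /=.
move=> -[[Htau Hwb0] [_ HWiW [NW HNW]] [_ HWbiWb [NWb HNWb]] _ _].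
have hW0 : forall i p, 0 < i -> W_of tau i p = 0.
  by move=> i p hi; rewrite /W_of /Gser (lt_geF hi) mul0r.
have hWb0 : forall i p, i < 0 -> Wb_of tau i p = 0.
  by move=> i p hi; rewrite /Wb_of /Gbser (lt_geF hi) mul0r.
have W00 : forall p, W_of tau 0 p = 1.
  by move=> p; rewrite /W_of /Gser lexx schur_coef0 divff.
have hWinv : forall i p, 0 < i -> Winv i p = 0.
  move=> i p hi.
  suff: forall d : nat, forall i, NW - d%:Z < i -> 0 < i -> Winv i p = 0.
    by move=> /(_ `|NW|%N i); apply => //; lia.
  elim=> [|d IH] j hj j0; first by apply: HNW; lia.
  case: (ltrP (NW - d%:Z) j) => hj'; first exact: IH.
  have := congr1 (fun f => f j p) HWiW; rewrite /Lam /= (gt_eqF j0).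
  rewrite (op_mul_win (lo:=j) (N:=1)) ?big_ord1 /=.
    by rewrite addr0 subrr W00 mulr1.
  move=> i' ha hb.
  have h1 : ~ (j < i') by move=> h; move: ha; rewrite IH ?eqxx //; lia.
  have h2 : ~ (i' < j) by move=> h; move: hb; rewrite hW0 ?eqxx //; lia.
  lia.
have hWbinv : forall i p, i < 0 -> Wbinv i p = 0.
  move=> i p hi.
  suff: forall d : nat, forall i, i < NWb + d%:Z -> i < 0 -> Wbinv i p = 0.
    by move=> /(_ `|NWb|%N i); apply => //; lia.
  elim=> [|d IH] j hj j0; first by apply: HNWb; lia.
  case: (ltrP j (NWb + d%:Z)) => hj'; first exact: IH.
  have := congr1 (fun f => f j p) HWbiWb; rewrite /Lam /= (lt_eqF j0).
  rewrite (op_mul_win (lo:=j) (N:=1)) ?big_ord1 /=.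
    rewrite addr0 subrr => /eqP; rewrite mulf_eq0 => /orP [/eqP //|].
    by move: (Hwb0 (shiftp j p)) => /negbTE ->.
  move=> i' ha hb.
  have h1 : ~ (i' < j) by move=> h; move: ha; rewrite IH ?eqxx //; lia.
  have h2 : ~ (j < i') by move=> h; move: hb; rewrite hWb0 ?eqxx //; lia.
  lia.
pose A := op_mul (W_of tau) (Lam (- n%:Z)).
have hA : forall j p, A j p = W_of tau (j - - n%:Z) p by move=> j p; exact: op_mul_Lam.
pose B := op_mul (Wb_of tau) (Lam (- - n%:Z)).
have hB : forall j p, B j p = Wb_of tau (j - - - n%:Z) p by move=> j p; exact: op_mul_Lam.
have LkZ : forall l p, - n%:Z < l -> op_mul A Winv l p = 0.
  move=> l p hl; rewrite (op_mul_win (lo:=0) (N:=0)) ?big_ord0 // => i ha hb.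
  have h1 : ~ (0 < i - - n%:Z) by move=> h; move: ha; rewrite hA hW0 ?eqxx.
  have h2 : ~ (0 < l - i) by move=> h; move: hb; rewrite hWinv ?eqxx.
  exfalso; lia.
have LmZ : forall l p, l < n%:Z -> op_mul B Wbinv l p = 0.
  move=> l p hl; rewrite (op_mul_win (lo:=0) (N:=0)) ?big_ord0 // => i ha hb.
  have h1 : ~ (i - - - n%:Z < 0) by move=> h; move: ha; rewrite hB hWb0 ?eqxx.
  have h2 : ~ (l - i < 0) by move=> h; move: hb; rewrite hWbinv ?eqxx.
  exfalso; lia.
have Hmin : op_minus (op_mul A Winv) = op_mul A Winv.
  apply: funext => i; apply: funext => q; rewrite /op_minus.
  by case: (ltrP i 0) => // h; rewrite LkZ //; lia.
have Hplus : op_plus (op_mul B Wbinv) = op_mul B Wbinv.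
  apply: funext => i; apply: funext => q; rewrite /op_plus.
  by case: (lerP 0 i) => // h; rewrite LmZ //; lia.
have Hplus0 : forall i q, op_plus (op_mul A Winv) i q = 0.
  move=> i q; rewrite /op_plus.
  by case: (lerP 0 i) => // h; rewrite LkZ //; lia.
have Hmin0 : forall i q, op_minus (op_mul B Wbinv) i q = 0.
  move=> i q; rewrite /op_minus.
  by case: (ltrP i 0) => // h; rewrite LmZ //; lia.
rewrite /Lk /Lm -/A -/B.
split; apply: funext => l; apply: funext => p; rewrite /fs_opp /op_zs.
- rewrite (fs_mul_win (lo := - n%:Z) (N:=1)); last first.
    move=> i; rewrite c_Gser_ntn //; case: ifP => [/eqP -> _ _|_]; [lia| by rewrite eqxx].
  rewrite big_ord1 /= addr0 c_Gser_ntn // eqxx mulN1r; congr (- _).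
  rewrite Hmin.
  rewrite (@assoc_win _ _ _ _ _ _ (- (`|l|%N + n)%N%:Z) (2 * (`|l| + n)).+1).
  + rewrite HWiW op_mul_Lam hA; congr (W_of tau _ p); lia.
  + move=> i ha hb.
    have h1 : ~ (- n%:Z < i) by move=> h; move: ha; rewrite LkZ ?eqxx.
    have h2 : ~ (0 < l - i) by move=> h; move: hb; rewrite hW0 ?eqxx.
    lia.
  + move=> i j hi ha hb.
    have h1 : ~ (0 < j - - n%:Z) by move=> h; move: ha; rewrite hA hW0 ?eqxx.
    have h2 : ~ (0 < i - j) by move=> h; move: hb; rewrite hWinv ?eqxx.
    lia.
  + move=> j ha; rewrite HWiW /Lam; case: ifP => [/eqP h _|_]; [lia|by rewrite eqxx].
  + move=> j i' hj ha hb.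
    have h1 : ~ (0 < i') by move=> h; move: ha; rewrite hWinv ?eqxx.
    have h2 : ~ (0 < l - j - i') by move=> h; move: hb; rewrite hW0 ?eqxx.
    lia.
- rewrite (fs_mul_win (lo := 0) (N:=0)) ?big_ord0; last first.
    by move=> i; rewrite c_Gbser_ntn eqxx.
  rewrite (op_mul_win (lo := 0) (N:=0)) ?big_ord0 //.
  by move=> i; rewrite Hplus0 eqxx.
- rewrite (fs_mul_win (lo := 0) (N:=0)) ?big_ord0; last first.
    by move=> i; rewrite c_Gser_ntbn eqxx.
  rewrite (op_mul_win (lo := 0) (N:=0)) ?big_ord0 ?oppr0 //.
  by move=> i; rewrite Hmin0 eqxx.
- rewrite (fs_mul_win (lo := n%:Z) (N:=1)); last first.
    move=> i; rewrite c_Gbser_ntbn //; case: ifP => [/eqP -> _ _|_]; [lia| by rewrite eqxx].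
  rewrite big_ord1 /= addr0 c_Gbser_ntbn // eqxx mul1r.
  rewrite Hplus.
  rewrite (@assoc_win _ _ _ _ _ _ (- (`|l|%N + n)%N%:Z) (2 * (`|l| + n)).+1).
  + rewrite HWbiWb op_mul_Lam hB; congr (Wb_of tau _ p); lia.
  + move=> i ha hb.
    have h1 : ~ (i < n%:Z) by move=> h; move: ha; rewrite LmZ ?eqxx.
    have h2 : ~ (l - i < 0) by move=> h; move: hb; rewrite hWb0 ?eqxx.
    lia.
  + move=> i j hi ha hb.
    have h1 : ~ (j - - - n%:Z < 0) by move=> h; move: ha; rewrite hB hWb0 ?eqxx.
    have h2 : ~ (i - j < 0) by move=> h; move: hb; rewrite hWbinv ?eqxx.
    lia.
  + move=> j ha; rewrite HWbiWb /Lam; case: ifP => [/eqP h _|_]; [lia|by rewrite eqxx].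
  + move=> j i' hj ha hb.
    have h1 : ~ (i' < 0) by move=> h; move: ha; rewrite hWbinv ?eqxx.
    have h2 : ~ (l - j - i' < 0) by move=> h; move: hb; rewrite hWb0 ?eqxx.
    lia.
Qed.
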